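(* A ring $R$ has the $2$-nil-sum property if and only if either $R$ is a simple ring with the $2$-nil-sum property, or $R$ is a commutative local ring whose Jacobson radical is nil.
   Context: All rings are associative with identity. A central unit of $R$ is a unit of $R$ lying in the center of $R$; a non central-unit is an element that is not a central unit. A ring $R$ has the $2$-nil-sum property if every non central-unit of $R$ is a sum of two nilpotent elements of $R$. *)

(* Defs.v *)
From mathcomp Require Import all_boot all_order all_algebra.
Set Implicit Arguments. Unset Strict Implicit. Unset Printing Implicit Defensive.
Import GRing.Theory.
Local Open Scope ring_scope.

Section Defs.
Variable R : nzRingType.

Definition is_central (x : R) : Prop := forall y : R, x * y = y * x.
Definition is_unit (x : R) : Prop := exists y : R, x * y = 1 /\ y * x = 1.
Definition central_unit (x : R) : Prop := is_central x /\ is_unit x.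
Definition is_nilpotent (x : R) : Prop := exists n : nat, x ^+ n = 0.

Definition two_nil_sum : Prop :=
  forall x : R, ~ central_unit x ->
    exists a b : R, is_nilpotent a /\ is_nilpotent b /\ x = a + b.

Definition additive_subgroup (I : R -> Prop) : Prop :=
  I 0 /\ (forall x y, I x -> I y -> I (x - y)).
Definition left_ideal (I : R -> Prop) : Prop :=
  additive_subgroup I /\ (forall r x, I x -> I (r * x)).
Definition two_sided_ideal (I : R -> Prop) : Prop :=
  left_ideal I /\ (forall r x, I x -> I (x * r)).

(* simple ring: nonzero (built into nzRingType) with only trivial two-sided ideals *)
Definition simple_ring : Prop :=
  forall I, two_sided_ideal I -> (forall x, I x -> x = 0) \/ (forall x, I x).

Definition comm_ring : Prop := forall x y : R, x * y = y * x.

Definition maximal_left_ideal (M : R -> Prop) : Prop :=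
  left_ideal M /\ ~ M 1 /\
  forall J, left_ideal J -> (forall x, M x -> J x) ->
     (forall x, J x -> M x) \/ (forall x, J x).

Definition local_ring : Prop :=
  exists M, maximal_left_ideal M /\
    forall N, maximal_left_ideal N -> forall x, N x <-> M x.

Definition jacobson (x : R) : Prop :=
  forall M, maximal_left_ideal M -> M x.

Definition jacobson_nil : Prop := forall x, jacobson x -> is_nilpotent x.
End Defs.

(* Main.v *)
Require Import Defs.
From mathcomp Require Import all_boot all_order all_algebra.
From Stdlib Require Import Classical.
From mathcomp Require Import zify.
Set Implicit Arguments. Unset Strict Implicit. Unset Printing Implicit Defensive.
Import GRing.Theory.
Local Open Scope ring_scope.

Lemma zz (V : zmodType) (X A B : V) : X - A = B + (X - (A + B)).
Proof. by rewrite opprD (addrC (-A)) addrA addrACA subrr add0r. Qed.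

Section Aux.
Variable R : nzRingType.
Implicit Types (I A : R -> Prop) (x y z a b : R).

Lemma I0 I : two_sided_ideal I -> I 0.
Proof. by case=> [[[]]]. Qed.
Lemma IB I x y : two_sided_ideal I -> I x -> I y -> I (x - y).
Proof. by case=> [[[_ H]]] _ _; apply: H. Qed.
Lemma IN I x : two_sided_ideal I -> I x -> I (- x).
Proof. by move=> H Hx; rewrite -sub0r; apply: IB => //; apply: I0. Qed.
Lemma ID I x y : two_sided_ideal I -> I x -> I y -> I (x + y).
Proof. by move=> H Hx Hy; rewrite -[y]opprK; apply: IB => //; apply: IN. Qed.
Lemma IMl I r x : two_sided_ideal I -> I x -> I (r * x).
Proof. by case=> [[_ H]] _; apply: H. Qed.
Lemma IMr I r x : two_sided_ideal I -> I x -> I (x * r).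
Proof. by case=> _ H; apply: H. Qed.

Lemma geom a n : (1 - a) * (\sum_(k < n) a ^+ k) = 1 - a ^+ n /\
                 (\sum_(k < n) a ^+ k) * (1 - a) = 1 - a ^+ n.
Proof.
elim: n => [|n [IH1 IH2]]; first by rewrite big_ord0 mulr0 mul0r expr0 subrr.
rewrite big_ord_recr /=.
have -> : \sum_(i < n) a ^+ widen_ord (leqnSn n) i = \sum_(k < n) a ^+ k by [].
split; [rewrite mulrDr IH1 mulrBl mul1r -exprS | rewrite mulrDl IH2 mulrBr mulr1 -exprSr];
  by rewrite addrA subrK.
Qed.

Lemma nil_inv a : is_nilpotent a -> exists w, (1 - a) * w = 1 /\ w * (1 - a) = 1.
Proof.
case=> n Hn; exists (\sum_(k < n) a ^+ k); have [H1 H2] := geom a n.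
by rewrite H1 H2 Hn subr0.
Qed.

Lemma pow_inv w z n : w * z = 1 -> w ^+ n * z ^+ n = 1.
Proof.
move=> H; elim: n => [|n IH]; first by rewrite !expr0 mulr1.
by rewrite exprSr exprS mulrA -(mulrA _ w) H mulr1.
Qed.

Lemma pow_mod I z i n : two_sided_ideal I -> I i -> I ((z + i) ^+ n - z ^+ n).
Proof.
move=> HI Hi; elim: n => [|n IH]; first by rewrite subrr; apply: I0.
have -> : (z + i) ^+ n.+1 - z ^+ n.+1 =
   z ^+ n * i + ((z + i) ^+ n - z ^+ n) * (z + i).
  by rewrite !exprSr mulrBl (mulrDr (z ^+ n)); apply: zz.
by apply: ID => //; [apply: IMl | apply: IMr].
Qed.

Lemma nil_opp a : is_nilpotent a -> is_nilpotent (- a).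
Proof. by case=> n Hn; exists n; rewrite exprNn Hn mulr0. Qed.

Definition eqm A x y := A (x - y).

Lemma eqm_refl A x : two_sided_ideal A -> eqm A x x.
Proof. by move=> H; rewrite /eqm subrr; apply: I0. Qed.
Lemma eqm_trans A x y z : two_sided_ideal A -> eqm A x y -> eqm A y z -> eqm A x z.
Proof.
move=> H h1 h2; rewrite /eqm -(subrK y x) -addrA; apply: ID => //.
Qed.
Lemma eqm_add A x y x' y' : two_sided_ideal A -> eqm A x y -> eqm A x' y' ->
  eqm A (x + x') (y + y').
Proof. by move=> H h1 h2; rewrite /eqm opprD addrACA; apply: ID. Qed.
Lemma eqm_mull A r x y : two_sided_ideal A -> eqm A x y -> eqm A (r * x) (r * y).
Proof. by move=> H h; rewrite /eqm -mulrBr; apply: IMl. Qed.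
Lemma eqm_mulr A r x y : two_sided_ideal A -> eqm A x y -> eqm A (x * r) (y * r).
Proof. by move=> H h; rewrite /eqm -mulrBl; apply: IMr. Qed.

Lemma sum_mod A u v : two_sided_ideal A -> (forall x y, A (x * y - y * x)) ->
  forall n i j, (i + j = n)%N -> exists r s,
    eqm A ((u + v) ^+ n) (r * u ^+ i + s * v ^+ j).
Proof.
move=> HA Hc; elim=> [|n IH] i j Hij.
  have -> : i = 0%N by case: i Hij.
  by exists 1, 0; rewrite expr0 mulr1 mul0r addr0; apply: eqm_refl.
case: i Hij => [|i'] Hij.
  by exists ((u + v) ^+ n.+1), 0; rewrite expr0 mulr1 mul0r addr0; apply: eqm_refl.
case: j Hij => [|j'] Hij.
  by exists 0, ((u + v) ^+ n.+1); rewrite expr0 mulr1 mul0r add0r; apply: eqm_refl.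
have [r1 [s1 E1]] := IH i' j'.+1 ltac:(lia).
have [r2 [s2 E2]] := IH i'.+1 j' ltac:(lia).
exists (r1 + r2 * v), (s1 * u + s2).
have -> : (r1 + r2 * v) * u ^+ i'.+1 + (s1 * u + s2) * v ^+ j'.+1 =
  (r1 * u ^+ i'.+1 + s1 * (u * v ^+ j'.+1)) + (r2 * (v * u ^+ i'.+1) + s2 * v ^+ j'.+1).
  by rewrite !mulrDl !mulrA addrACA.
rewrite exprSr mulrDr; apply: eqm_add => //.
  apply: (eqm_trans HA (eqm_mulr u HA E1)).
  rewrite mulrDl -mulrA -exprSr -mulrA; apply: eqm_add => //; first exact: eqm_refl.
  by apply: eqm_mull => //; apply: Hc.
apply: (eqm_trans HA (eqm_mulr v HA E2)).
rewrite mulrDl -!mulrA -exprSr; apply: eqm_add => //; last exact: eqm_refl.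
by apply: eqm_mull => //; apply: Hc.
Qed.

Lemma nilmod_add A u v p q : two_sided_ideal A -> (forall x y, A (x * y - y * x)) ->
  A (u ^+ p) -> A (v ^+ q) -> A ((u + v) ^+ (p + q)).
Proof.
move=> HA Hc hu hv; have [r [s E]] := sum_mod u v HA Hc (erefl (p + q)%N).
have : A (r * u ^+ p + s * v ^+ q) by apply: ID => //; apply: IMl.
move=> h; have := ID HA E h; by rewrite subrK.
Qed.


Lemma nil_modA A a : two_sided_ideal A -> is_nilpotent a -> exists n, A (a ^+ n).
Proof. by move=> H [n Hn]; exists n; rewrite Hn; apply: I0. Qed.

Lemma central_ideal I : two_nil_sum R -> two_sided_ideal I -> ~ I 1 ->
  forall i, I i -> is_central i.
Proof.
move=> H HI H1 i Hi.
have Hcu : central_unit (1 + i).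
  apply: NNPP => Hn; have [a [b [Ha [Hb E]]]] := H _ Hn.
  have [q Hq] := Hb.
  have Eb : b = (1 - a) + i.
    by apply: (addrI a); rewrite -E addrA (addrCA a) subrr addr0.
  have := pow_mod (1 - a) q HI Hi; rewrite -Eb Hq sub0r => /(IN HI); rewrite opprK => h.
  have [w [_ Hw]] := nil_inv Ha.
  by apply: H1; rewrite -(pow_inv q Hw); apply: IMl.
move=> y; case: Hcu => Hc _; have := Hc y; rewrite mulrDl mulrDr mul1r mulr1.
by move/addrI.
Qed.

Lemma comm_of_ideal A : two_nil_sum R -> two_sided_ideal A -> ~ A 1 ->
  (forall x y, A (x * y - y * x)) -> comm_ring R.
Proof.
move=> H HA H1 Hc x y; apply: NNPP => hxy.
have nx : ~ central_unit x by case=> h _; apply: hxy; apply: h.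
have n1x : ~ central_unit (1 + x).
  case=> h _; apply: hxy; have := h y; rewrite mulrDl mulrDr mul1r mulr1.
  by move/addrI.
have [a [b [Ha [Hb E]]]] := H _ nx.
have [a' [b' [Ha' [Hb' E']]]] := H _ n1x.
have E1 : 1 = (a' + b') + (- a + - b) by rewrite -E' E -opprD addrK.
have [p hp] := nil_modA HA Ha'. have [q hq] := nil_modA HA Hb'.
have [p' hp'] := nil_modA HA (nil_opp Ha). have [q' hq'] := nil_modA HA (nil_opp Hb).
have := nilmod_add HA Hc (nilmod_add HA Hc hp hq) (nilmod_add HA Hc hp' hq').
by rewrite -E1 expr1n.
Qed.

Lemma comm_nil_add (Hc : comm_ring R) a b : is_nilpotent a -> is_nilpotent b ->
  is_nilpotent (a + b).
Proof.
have HA : two_sided_ideal (fun r : R => r = 0).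
  split; [split; [split=> [|x y -> ->]; by rewrite ?subrr|by move=> r x ->; rewrite mulr0]|].
  by move=> r x ->; rewrite mul0r.
have Hc' : forall x y : R, x * y - y * x = 0 by move=> x y; rewrite Hc subrr.
move=> [p hp] [q hq]; exists (p + q)%N; exact: (nilmod_add HA Hc' hp hq).
Qed.

Lemma comm_case : two_nil_sum R -> comm_ring R -> local_ring R /\ jacobson_nil R.
Proof.
move=> H Hc.
have nonunit_nil : forall x, ~ is_unit x -> is_nilpotent x.
  move=> x hx; have [a [b [Ha [Hb ->]]]] : exists a b, is_nilpotent a /\ is_nilpotent b /\ x = a + b.
    by apply: H; case.
  exact: comm_nil_add.
have unit_notin : forall J, left_ideal J -> ~ J 1 -> forall x, J x -> ~ is_unit x.
  move=> J [_ HJ] h1 x Jx [y [_ hy]]; apply: h1; rewrite -hy; exact: HJ.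
have HM : maximal_left_ideal (@is_nilpotent R).
  split; [split; [split|]|split].
  - by exists 1%N; rewrite expr1.
  - by move=> x y hx hy; apply: comm_nil_add => //; apply: nil_opp.
  - by move=> r x [n hn]; exists n; rewrite exprMn_comm ?hn ?mulr0 //; apply: Hc.
  - by case=> n; rewrite expr1n; apply/eqP; exact: oner_neq0.
  move=> J HJ hMJ; case: (classic (J 1)) => h1; [right|left].
    by move=> x; rewrite -[x]mulr1; case: HJ => _; apply.
  move=> x Jx; apply: nonunit_nil; exact: (unit_notin J HJ h1).
have sub : forall N, maximal_left_ideal N -> forall x, N x -> is_nilpotent x.
  move=> N [HN [h1 _]] x Nx; apply: nonunit_nil; exact: (unit_notin N HN h1).
split.
  exists (@is_nilpotent R); split => // N HN x; split; first exact: sub.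
  case: HN => [HN [h1 Hmax]]; case: (Hmax _ (proj1 HM) (sub N (conj HN (conj h1 Hmax)))).
    by move=> h; apply: h.
  by move=> h; case: HM => _ [] /(_ (h 1)).
by move=> x hx; apply: hx.
Qed.

End Aux.

Theorem theorem2p2 (R : nzRingType) :
  two_nil_sum R <->
  ((simple_ring R /\ two_nil_sum R) \/
   (comm_ring R /\ local_ring R /\ jacobson_nil R)).
Proof.
split.
- move=> H; case: (classic (simple_ring R)) => hs; first by left.
  right.
  have [I hI] := not_all_ex_not _ _ hs.
  have [HI hI2] := imply_to_and _ _ hI.
  have [hz hall] := not_or_and _ _ hI2.
  have H1 : ~ I 1.
    by move=> h; apply: hall => x; rewrite -[x]mulr1; apply: IMl.
  have [i0 hi0] := not_all_ex_not _ _ hz.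
  have [Ii0 ni0] := imply_to_and _ _ hi0.
  have Hcen := central_ideal H HI H1.
  pose A := fun r : R => forall i, I i -> r * i = 0.
  have HA : two_sided_ideal A.
    split; [split; [split|]|].
    - by move=> i _; rewrite mul0r.
    - by move=> x y hx hy i Ii; rewrite mulrBl hx ?hy ?subrr.
    - by move=> r x hx i Ii; rewrite -mulrA hx ?mulr0.
    - by move=> r x hx i Ii; rewrite -mulrA hx //; apply: IMl.
  have HA1 : ~ A 1 by move=> h; apply: ni0; rewrite -(mul1r i0); apply: h.
  have HAc : forall x y, A (x * y - y * x).
    move=> x y i Ii; rewrite mulrBl -!mulrA.
    have Iyi : I (y * i) by apply: IMl.
    by rewrite -(Hcen _ Iyi x) -mulrA (Hcen _ Ii x) subrr.
  have Hc := comm_of_ideal H HA HA1 HAc.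
  by split => //; apply: comm_case.
- case=> [[_ //]|[Hc [[M [HM Huniq]] Hj]]] x hx.
  have nu : ~ is_unit x by move=> u; apply: hx; split => // y; apply: Hc.
  have jm : forall m, M m -> jacobson m.
    by move=> m hm N HN; apply/(Huniq N HN).
  have Mx : M x.
    apply: NNPP => nMx.
    pose J := fun z : R => exists m r, M m /\ z = m + r * x.
    have HJ : left_ideal J.
      case: HM => [[[M0 MB] ML] _]; split; [split|].
      - by exists 0, 0; rewrite mul0r addr0; split.
      - move=> _ _ [m [r [hm ->]]] [m' [r' [hm' ->]]].
        exists (m - m'), (r - r'); split; first exact: MB.
        by rewrite mulrBl opprD !addrA; congr (_ + _); rewrite -!addrA; congr (_ + _); rewrite addrC.
      - move=> s _ [m [r [hm ->]]]; exists (s * m), (s * r); split; first exact: ML.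
        by rewrite mulrDr mulrA.
    have M0 : M 0 by case: HM => [[[]]].
    have MJ : forall z, M z -> J z by move=> z hz; exists z, 0; rewrite mul0r addr0; split.
    case: HM => _ [_ Hmax]; case: (Hmax J HJ MJ) => h.
      by apply: nMx; apply: h; exists 0, 1; rewrite mul1r add0r; split.
    have [m [r [hm E]]] := h 1.
    have nm : is_nilpotent (m) by apply: Hj; apply: jm.
    have [w [hw1 hw2]] := nil_inv nm.
    have Erx : r * x = 1 - m by rewrite -[r * x](addKr m) -E addrC.
    apply: nu; exists (r * w).
    have e : x * (r * w) = 1 by rewrite mulrA (Hc x r) Erx hw1.
    by split => //; rewrite Hc.
  exists x, 0; split; first by apply: Hj; apply: jm.
  by split; [exists 1%N; rewrite expr1 | rewrite addr0].
Qed.
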